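(* Let $M$ be a smooth Riemannian manifold embedded in $\mathbb{R}^p$, and let $\mathcal{D}\subset\mathbb{R}^d$ be a compact, connected, Lipschitz domain. Let $\mathcal{V}(\mathcal{D},\mathbb{R}^p)\subset C(\mathcal{D},\mathbb{R}^p)$ be a vector space of continuous functions, $\mathcal{V}_h(\mathcal{D},\mathbb{R}^p)\subset \mathcal{V}(\mathcal{D},\mathbb{R}^p)$ a finite-dimensional subspace, and $\mathcal{I}_h:\mathcal{V}(\mathcal{D},\mathbb{R}^p)\to\mathcal{V}_h(\mathcal{D},\mathbb{R}^p)$ a projection. Let $U\subset\mathbb{R}^p$ be a tubular neighborhood of $M$ on which the closest point projection $\mathcal{P}_M(v)=\operatorname{argmin}_{m\in M}\|m-v\|$ is well-defined and smooth. Let $\widetilde{\mathcal{V}}(\mathcal{D},M)=\{u\in\mathcal{V}(\mathcal{D},\mathbb{R}^p): u(x)\in M \text{ and } \mathcal{I}_hu(x)\in U \ \forall x\in\mathcal{D}\}$, and for $u\in\widetilde{\mathcal{V}}(\mathcal{D},M)$ define $(\mathcal{I}_{h,M}u)(x)=\mathcal{P}_M(\mathcal{I}_hu(x))$. Define $C_0(u)=\sup_{x\in\mathcal{D}}\|\nabla u(x)\|$, $C_1=\sup_{m\in M}\|\nabla\mathcal{P}_M(m)\|$, and $C_2=\sup_{u_1,u_2\in U,\,u_1\ne u_2}\frac{\|\nabla\mathcal{P}_M(u_1)-\nabla\mathcal{P}_M(u_2)\|}{\|u_1-u_2\|}$. Then for any $u\in\widetilde{\mathcal{V}}(\mathcal{D},M)\cap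 C^1(\mathcal{D},\mathbb{R}^p)$ and any $x\in\mathcal{D}$ (with $\mathcal{I}_hu$ differentiable at $x$), \[\|\nabla\mathcal{I}_{h,M}u(x)-\nabla u(x)\|\le C_1\|\nabla\mathcal{I}_hu(x)-\nabla u(x)\| + C_2\|\mathcal{I}_hu(x)-u(x)\|\big(\|\nabla\mathcal{I}_hu(x)-\nabla u(x)\|+C_0(u)\big).\]
   Context: $\|\cdot\|$ denotes the Euclidean norm on $\mathbb{R}^p$; for matrices, $\|\cdot\|$ denotes any consistent (submultiplicative, compatible) matrix norm. Here $\nabla u(x)\in\mathbb{R}^{p\times d}$ and $\nabla\mathcal{P}_M(v)\in\mathbb{R}^{p\times p}$ denote the gradients (Jacobian matrices) of $u$ and $\mathcal{P}_M$, viewed as $\mathbb{R}^p$-valued maps via the embedding $M\subset\mathbb{R}^p$. *)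

(* Defs.v *)
From HB Require Import structures.
From mathcomp Require Import all_boot all_order all_algebra.
From mathcomp Require Import all_classical all_reals all_analysis.

Set Implicit Arguments.
Unset Strict Implicit.
Unset Printing Implicit Defensive.

Import Order.TTheory GRing.Theory Num.Theory.
Import numFieldNormedType.Exports.

Local Open Scope classical_set_scope.
Local Open Scope ring_scope.

Section Defs.
Variable R : realType.

Definition enorm (n : nat) (v : 'cV[R]_n) : R :=
  Num.sqrt (\sum_(i < n) v i 0 ^+ 2).

Definition dotv (n : nat) (v w : 'cV[R]_n) : R := \sum_(i < n) v i 0 * w i 0.

Definition consistent_mxnorm (N : forall m n : nat, 'M[R]_(m, n) -> R) : Prop :=
  (forall m n (A : 'M[R]_(m, n)), 0 <= N m n A) /\
  (forall m n (A : 'M[R]_(m, n)), N m n A = 0 -> A = 0) /\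
  (forall m n (a : R) (A : 'M[R]_(m, n)), N m n (a *: A) = `|a| * N m n A) /\
  (forall m n (A B : 'M[R]_(m, n)), N m n (A + B) <= N m n A + N m n B) /\
  (forall m n k (A : 'M[R]_(m, n)) (B : 'M[R]_(n, k)),
      N m k (A *m B) <= N m n A * N n k B) /\
  (forall m n (A : 'M[R]_(m, n)) (v : 'cV[R]_n),
      enorm (A *m v) <= N m n A * enorm v).

Definition jac (n q : nat) (f : 'cV[R]_n -> 'cV[R]_q) (x : 'cV[R]_n) : 'M[R]_(q, n) :=
  \matrix_(i < q, j < n) ('D_(delta_mx j 0) f x) i 0.

Definition iter_D (n q : nat) (vs : seq 'cV[R]_n) (f : 'cV[R]_n -> 'cV[R]_q)
  : 'cV[R]_n -> 'cV[R]_q :=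
  foldr (fun v g => 'D_v g) f vs.

Definition smooth_on (n q : nat) (U : set 'cV[R]_n) (f : 'cV[R]_n -> 'cV[R]_q) : Prop :=
  forall (vs : seq 'cV[R]_n) (v : 'cV[R]_n) (x : 'cV[R]_n), U x ->
    derivable (iter_D vs f) x v /\ {for x, continuous (iter_D vs f)}.

(* M is a smooth embedded submanifold of R^p (of some dimension k), given
   locally as the regular zero set of a smooth submersion. *)
Definition embedded_submanifold (p : nat) (M : set 'cV[R]_p) : Prop :=
  exists k : nat, (k <= p)%N /\
    forall m, M m -> exists (W : set 'cV[R]_p) (F : 'cV[R]_p -> 'cV[R]_(p - k)),
      [/\ open W, W m, smooth_on W F,
          (forall y, W y -> \rank (jac F y) = (p - k)%N) &
          (forall y, W y -> (M y <-> F y = 0))].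

(* D is the closure of a bounded Lipschitz domain (nonempty connected open set
   whose boundary is locally the graph of a Lipschitz function). *)
Definition lipschitz_domain (d : nat) (D : set 'cV[R]_d) : Prop :=
  exists Om : set 'cV[R]_d,
    [/\ open Om, Om !=set0, connected Om, D = closure Om &
      forall x, closure Om x -> ~ Om x ->
        exists (r : R) (e : 'cV[R]_d) (g : 'cV[R]_d -> R) (L : R),
          [/\ 0 < r, enorm e = 1,
              (forall y z, `|g y - g z| <= L * enorm (y - z)) &
              (forall y, enorm (y - x) < r ->
                 (Om y <-> dotv y e > g (y - dotv y e *: e)))]].

Definition is_rel_grad (d p : nat) (D : set 'cV[R]_d) (f : 'cV[R]_d -> 'cV[R]_p)
  (x : 'cV[R]_d) (J : 'M[R]_(p, d)) : Prop :=
  forall eps : R, 0 < eps -> exists2 delta : R, 0 < delta &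
    forall y, D y -> enorm (y - x) < delta ->
      enorm (f y - f x - J *m (y - x)) <= eps * enorm (y - x).

Definition fun_subspace (d p : nat) (V : set ('cV[R]_d -> 'cV[R]_p)) : Prop :=
  V (fun _ => 0) /\
  forall (a : R) f g, V f -> V g -> V (fun y => a *: f y + g y).

Definition finite_dim_subspace (d p : nat) (V Vh : set ('cV[R]_d -> 'cV[R]_p)) : Prop :=
  exists (n : nat) (b : 'I_n -> 'cV[R]_d -> 'cV[R]_p),
    (forall i, V (b i)) /\
    forall f, Vh f <-> exists c : 'I_n -> R, f = (fun y => \sum_(i < n) c i *: b i y).

Definition projection_onto (d p : nat) (V Vh : set ('cV[R]_d -> 'cV[R]_p))
  (Ih : ('cV[R]_d -> 'cV[R]_p) -> ('cV[R]_d -> 'cV[R]_p)) : Prop :=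
  (forall f, V f -> Vh (Ih f)) /\
  (forall (a : R) f g, V f -> V g ->
      Ih (fun y => a *: f y + g y) = (fun y => a *: Ih f y + Ih g y)) /\
  (forall f, Vh f -> Ih f = f).

Definition closest_point_proj_on (p : nat) (M U : set 'cV[R]_p)
  (P : 'cV[R]_p -> 'cV[R]_p) : Prop :=
  [/\ open U, M `<=` U, smooth_on U P &
    forall v, U v ->
      [/\ M (P v),
          (forall m, M m -> enorm (P v - v) <= enorm (m - v)) &
          (forall m, M m -> enorm (m - v) <= enorm (P v - v) -> m = P v)]].

Local Open Scope ereal_scope.

Definition C0_const (d p : nat) (N : forall m n : nat, 'M[R]_(m, n) -> R)
  (D : set 'cV[R]_d) (Du : 'cV[R]_d -> 'M[R]_(p, d)) : \bar R :=
  ereal_sup [set (N p d (Du y))%:E | y in D].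

Definition C1_const (p : nat) (N : forall m n : nat, 'M[R]_(m, n) -> R)
  (M : set 'cV[R]_p) (P : 'cV[R]_p -> 'cV[R]_p) : \bar R :=
  ereal_sup [set (N p p (jac P m))%:E | m in M].

Definition C2_const (p : nat) (N : forall m n : nat, 'M[R]_(m, n) -> R)
  (U : set 'cV[R]_p) (P : 'cV[R]_p -> 'cV[R]_p) : \bar R :=
  ereal_sup [set z | exists u1 u2, [/\ U u1, U u2, u1 != u2 &
     z = (N p p (jac P u1 - jac P u2) / enorm (u1 - u2))%:E]].

End Defs.

(* Main.v *)
Require Import Defs.
From HB Require Import structures.
From mathcomp Require Import all_boot all_order all_algebra.
From mathcomp Require Import all_classical all_reals all_analysis.
From mathcomp Require Import ring lra.
Import Order.TTheory GRing.Theory Num.Theory.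
Import numFieldNormedType.Exports.
Local Open Scope classical_set_scope.
Local Open Scope ring_scope.
Set Implicit Arguments.
Unset Strict Implicit.

Lemma sumsq_ge0 {R : realType} n (v : 'cV[R]_n) : 0 <= \sum_(i < n) v i 0 ^+ 2.
Proof. by apply: sumr_ge0 => i _; exact: sqr_ge0. Qed.

Lemma enorm_sqr {R : realType} n (v : 'cV[R]_n) :
  enorm v ^+ 2 = \sum_(i < n) v i 0 ^+ 2.
Proof. by rewrite /enorm sqr_sqrtr // sumsq_ge0. Qed.

Lemma enorm_ge0 {R : realType} n (v : 'cV[R]_n) : 0 <= enorm v.
Proof. exact: sqrtr_ge0. Qed.

Lemma enorm_entry {R : realType} n (v : 'cV[R]_n) i : `|v i 0| <= enorm v.
Proof.
rewrite -sqrtr_sqr /enorm (ler_sqrt _ (sumsq_ge0 v)) (bigD1 i) //=.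
rewrite lerDl; apply: sumr_ge0 => j _; exact: sqr_ge0.
Qed.

Lemma enorm_eq0 {R : realType} n (v : 'cV[R]_n) : enorm v = 0 -> v = 0.
Proof.
move=> h; apply/matrixP => i j; rewrite (ord1 j) mxE.
by apply/eqP; rewrite -normr_le0 -h enorm_entry.
Qed.

Lemma sum_sqr_le {R : realType} n (a : 'I_n -> R) : (forall i, 0 <= a i) ->
  \sum_(i < n) a i ^+ 2 <= (\sum_(i < n) a i) ^+ 2.
Proof.
elim: n a => [|n IH] a a0; first by rewrite !big_ord0 expr0n.
rewrite !big_ord_recr /=.
have s0 : 0 <= \sum_(i < n) a (widen_ord (leqnSn n) i) by apply: sumr_ge0.
have := IH (fun i => a (widen_ord (leqnSn n) i)) (fun i => a0 _).
set S := \sum_(i < n) _; set T := \sum_(i < n) _ => h.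
have := a0 ord_max; set x := a ord_max => x0.
rewrite sqrrD lerD2r; apply: le_trans h _.
by rewrite lerDl mulrn_wge0 // mulr_ge0.
Qed.

Lemma enorm_le_sum {R : realType} n (v : 'cV[R]_n) :
  enorm v <= \sum_(i < n) `|v i 0|.
Proof.
rewrite -(ger0_norm (sumr_ge0 _ _)); last by move=> i _.
rewrite -sqrtr_sqr /enorm ler_sqrt; last by rewrite sqr_ge0.
apply: le_trans (sum_sqr_le _) ; last by move=> i.
by apply: ler_sum => i _; rewrite real_normK // num_real.
Qed.

Lemma sumrD' {R : realType} n (F G : 'I_n -> R) :
  \sum_(i < n) (F i + G i) = \sum_(i < n) F i + \sum_(i < n) G i.
Proof. exact: big_split. Qed.

Lemma sumsum3 {R : realType} n (F G H : 'I_n -> 'I_n -> R) :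
  \sum_(i < n) \sum_(j < n) (F i j + G i j - H i j) =
  \sum_(i < n) \sum_(j < n) F i j + \sum_(i < n) \sum_(j < n) G i j
   - \sum_(i < n) \sum_(j < n) H i j.
Proof.
under eq_bigr => i _ do rewrite sumrB sumrD'.
by rewrite sumrB sumrD'.
Qed.

Lemma cauchy_schwarz {R : realType} n (a b : 'I_n -> R) :
  (\sum_(i < n) a i * b i) ^+ 2 <= (\sum_(i < n) a i ^+ 2) * (\sum_(i < n) b i ^+ 2).
Proof.
have H : 0 <= \sum_(i < n) \sum_(j < n) (a i * b j - a j * b i) ^+ 2.
  by apply: sumr_ge0 => i _; apply: sumr_ge0 => j _; exact: sqr_ge0.
have T : forall i j, (a i * b j - a j * b i) ^+ 2 =
     a i ^+ 2 * b j ^+ 2 + a j ^+ 2 * b i ^+ 2 - 2 * ((a i * b i) * (a j * b j)).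
  by move=> i j; ring.
have E : \sum_(i < n) \sum_(j < n) (a i * b j - a j * b i) ^+ 2 =
   \sum_(i < n) \sum_(j < n) (a i ^+ 2 * b j ^+ 2) + \sum_(i < n) \sum_(j < n) (a j ^+ 2 * b i ^+ 2)
   - 2 * \sum_(i < n) \sum_(j < n) ((a i * b i) * (a j * b j)).
  rewrite (eq_bigr _ (fun i _ => eq_bigr _ (fun j _ => T i j))).
  rewrite sumsum3 mulr_sumr; congr (_ - _); apply: eq_bigr => i _.
  by rewrite mulr_sumr.
have E1 : \sum_(i < n) \sum_(j < n) (a i ^+ 2 * b j ^+ 2) =
   (\sum_(i < n) a i ^+ 2) * (\sum_(i < n) b i ^+ 2).
  by rewrite mulr_suml; apply: eq_bigr => i _; rewrite mulr_sumr.
have E2 : \sum_(i < n) \sum_(j < n) (a j ^+ 2 * b i ^+ 2) =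
   (\sum_(i < n) a i ^+ 2) * (\sum_(i < n) b i ^+ 2).
  rewrite mulrC mulr_suml; apply: eq_bigr => i _; rewrite mulr_sumr.
  by apply: eq_bigr => j _; rewrite mulrC.
have E3 : \sum_(i < n) \sum_(j < n) ((a i * b i) * (a j * b j)) =
   (\sum_(i < n) a i * b i) ^+ 2.
  by rewrite expr2 mulr_suml; apply: eq_bigr => i _; rewrite mulr_sumr.
move: H; rewrite E E1 E2 E3; lra.
Qed.

Lemma enormD {R : realType} n (v w : 'cV[R]_n) :
  enorm (v + w) <= enorm v + enorm w.
Proof.
rewrite -(ger0_norm (addr_ge0 (enorm_ge0 v) (enorm_ge0 w))).
rewrite -sqrtr_sqr {1}/enorm ler_sqrt; last by rewrite sqr_ge0.
rewrite sqrrD !enorm_sqr.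
have -> : \sum_(i < n) (v + w) i 0 ^+ 2 =
   \sum_(i < n) v i 0 ^+ 2 + \sum_(i < n) w i 0 ^+ 2 + 2 * \sum_(i < n) v i 0 * w i 0.
  rewrite mulr_sumr -!sumrD'; apply: eq_bigr => i _; rewrite !mxE; ring.
have h2 : \sum_(i < n) v i 0 * w i 0 <= enorm v * enorm w.
  have := cauchy_schwarz (fun i => v i 0) (fun i => w i 0).
  rewrite -!enorm_sqr -exprMn => h.
  apply: le_trans (ler_norm _) _.
  rewrite -(ger0_norm (mulr_ge0 (enorm_ge0 v) (enorm_ge0 w))).
  by rewrite -ler_sqr ?nnegrE ?normr_ge0 // !real_normK ?num_real.
rewrite mulr2n; lra.
Qed.

Lemma enormZ {R : realType} n (c : R) (v : 'cV[R]_n) :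
  enorm (c *: v) = `|c| * enorm v.
Proof.
rewrite /enorm -sqrtr_sqr -sqrtrM ?sqr_ge0 // mulr_sumr.
by congr Num.sqrt; apply: eq_bigr => i _; rewrite !mxE exprMn.
Qed.

Lemma enormN {R : realType} n (v : 'cV[R]_n) : enorm (- v) = enorm v.
Proof. by rewrite -scaleN1r enormZ normrN normr1 mul1r. Qed.

Lemma enormB {R : realType} n (v w : 'cV[R]_n) : enorm (v - w) = enorm (w - v).
Proof. by rewrite -enormN opprB. Qed.

Definition efrechet {R : realType} p q (g : 'cV[R]_p -> 'cV[R]_q) (a : 'cV[R]_p)
  (B : 'M[R]_(q, p)) : Prop :=
  forall eps : R, 0 < eps -> exists2 delta : R, 0 < delta &
    forall z, enorm (z - a) < delta ->
      enorm (g z - g a - B *m (z - a)) <= eps * enorm (z - a).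

Lemma rel_grad_lip {R : realType} (N : forall m n : nat, 'M[R]_(m, n) -> R) d p
  (D : set 'cV[R]_d) (f : 'cV[R]_d -> 'cV[R]_p) x A :
  consistent_mxnorm N -> is_rel_grad D f x A ->
  exists2 delta : R, 0 < delta & forall y, D y -> enorm (y - x) < delta ->
     enorm (f y - f x) <= (N _ _ A + 1) * enorm (y - x).
Proof.
move=> [N0 [_ [_ [_ [_ Nv]]]]] hf.
have [del del0 hd] := hf 1 ltr01.
exists del => // y Dy yx.
have -> : f y - f x = (f y - f x - A *m (y - x)) + A *m (y - x) by rewrite subrK.
apply: le_trans (enormD _ _) _.
rewrite mulrDl mul1r [leLHS]addrC lerD //; rewrite -[X in _ <= X]mul1r; exact: hd.
Qed.

Lemma chain_rel {R : realType} (N : forall m n : nat, 'M[R]_(m, n) -> R) d p q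
  (D : set 'cV[R]_d) (f : 'cV[R]_d -> 'cV[R]_p) (g : 'cV[R]_p -> 'cV[R]_q) x A B :
  consistent_mxnorm N -> is_rel_grad D f x A -> efrechet g (f x) B ->
  is_rel_grad D (g \o f) x (B *m A).
Proof.
move=> hN hf hg eps eps0.
have [N0 [_ [_ [_ [_ Nv]]]]] := hN.
have [d1 d10 h1] := rel_grad_lip hN hf.
set K := N _ _ A + 1.
have K0 : 0 < K by rewrite /K ltr_wpDl // N0.
set L := N _ _ B + 1.
have L0 : 0 < L by rewrite /L ltr_wpDl // N0.
have e1 : 0 < eps / (2 * K) by rewrite divr_gt0 // mulr_gt0.
have e2 : 0 < eps / (2 * L) by rewrite divr_gt0 // mulr_gt0.
have [dg dg0 hgd] := hg _ e1.
have [d2 d20 h2] := hf _ e2.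
exists (Num.min d1 (Num.min d2 (dg / K))).
  by rewrite !lt_min d10 d20 divr_gt0.
move=> y Dy; rewrite !lt_min => /and3P [yd1 yd2 ydg].
have hfy := h1 y Dy yd1.
have E : (g \o f) y - (g \o f) x - (B *m A) *m (y - x) =
   (g (f y) - g (f x) - B *m (f y - f x)) + B *m (f y - f x - A *m (y - x)).
  by rewrite /= (mulmxBr B (f y - f x) (A *m (y - x))) -mulmxA addrA subrK.
rewrite E; apply: le_trans (enormD _ _) _.
have ey0 := enorm_ge0 (y - x).
have T1 : enorm (g (f y) - g (f x) - B *m (f y - f x)) <= eps / 2 * enorm (y - x).
  have fyd : enorm (f y - f x) < dg.
    apply: le_lt_trans hfy _; rewrite -ltr_pdivlMl // mulrC; exact: ydg.
  apply: le_trans (hgd _ fyd) _.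
  apply: le_trans (ler_wpM2l (ltW e1) hfy) _.
  rewrite mulrA; apply: ler_wpM2r => //.
  by rewrite invfM mulrA mulfVK ?gt_eqF.
have T2 : enorm (B *m (f y - f x - A *m (y - x))) <= eps / 2 * enorm (y - x).
  apply: le_trans (Nv _ _ _ _) _.
  apply: le_trans (ler_wpM2l (N0 _ _ _) (h2 y Dy yd2)) _.
  rewrite mulrA; apply: ler_wpM2r => //.
  have -> : N _ _ B * (eps / (2 * L)) = (N _ _ B / L) * (eps / 2).
    by field; rewrite gt_eqF.
  apply: ler_piMl; first by rewrite divr_ge0 // ltW.
  by rewrite ler_pdivrMr // mul1r /L lerDl.
by apply: le_trans (lerD T1 T2) _; rewrite -mulrDl -splitr.
Qed.

Lemma addKx2 (V : zmodType) (x y : V) : x + y - x = y.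
Proof. by rewrite addrC addKr. Qed.

Lemma addKx3 (V : zmodType) (x y z : V) : x + y + z - x = y + z.
Proof. by rewrite -[x + y + z]addrA addKx2. Qed.

Lemma rel_grad_diff {R : realType} d p (D : set 'cV[R]_d) (f : 'cV[R]_d -> 'cV[R]_p) x A B :
  is_rel_grad D f x A -> is_rel_grad D f x B ->
  forall eps : R, 0 < eps -> exists2 delta : R, 0 < delta &
    forall y, D y -> enorm (y - x) < delta ->
      enorm ((A - B) *m (y - x)) <= eps * enorm (y - x).
Proof.
move=> hA hB eps eps0.
have e2 : 0 < eps / 2 by rewrite divr_gt0.
have [dA dA0 hdA] := hA _ e2; have [dB dB0 hdB] := hB _ e2.
exists (Num.min dA dB); first by rewrite lt_min dA0 dB0.
move=> y Dy; rewrite lt_min => /andP [ya yb].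
have -> : (A - B) *m (y - x) =
  (f y - f x - B *m (y - x)) - (f y - f x - A *m (y - x)).
  set X := f y - f x.
  by rewrite mulmxBl [in RHS]opprB [in RHS]addrC [in RHS]addrA subrK.
apply: le_trans (enormD _ _) _; rewrite enormN.
by rewrite (splitr eps) mulrDl; apply: lerD; [exact: hdB | exact: hdA].
Qed.

Lemma le0_eps {R : realType} (a K : R) : 0 <= K ->
  (forall eps : R, 0 < eps -> a <= eps * K) -> a <= 0.
Proof.
move=> K0 h; apply/ler_addgt0Pr => e e0; rewrite add0r.
have K1 : 0 < K + 1 by rewrite ltr_wpDl.
apply: le_trans (h (e / (K + 1)) (divr_gt0 e0 K1)) _.
rewrite mulrAC ler_pdivrMr // ler_wpM2l ?(ltW e0) //.
by rewrite lerDl.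
Qed.

Lemma rel_grad_unique {R : realType} d p (D : set 'cV[R]_d) (f : 'cV[R]_d -> 'cV[R]_p) x A B :
  (exists e : 'cV[R]_d, exists c : R, exists t0 : R, [/\ 0 < c, 0 < t0 &
     forall t w, 0 < t -> t < t0 -> enorm w < c * t -> D (x + t *: e + w)]) ->
  is_rel_grad D f x A -> is_rel_grad D f x B -> A = B.
Proof.
move=> [e [c [t0 [c0 t00 hD]]]] hA hB.
have hd := rel_grad_diff hA hB.
set Cm := A - B.
have ee0 := enorm_ge0 e.
have step : forall w0, enorm w0 < c -> Cm *m w0 = 0.
  move=> w0 w0c; apply: enorm_eq0; apply/eqP; rewrite eq_le enorm_ge0 andbT.
  apply: (le0_eps (K := 2 * enorm e + c)).
    by rewrite addr_ge0 ?mulr_ge0 // ltW.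
  move=> eps eps0.
  have [del del0 hdel] := hd _ eps0.
  have ec0 : 0 < enorm e + c by rewrite ltr_wpDl.
  set t := Num.min t0 (del / (enorm e + c)) / 2.
  have tm0 : 0 < Num.min t0 (del / (enorm e + c)) by rewrite lt_min t00 divr_gt0.
  have t0' : 0 < t by rewrite divr_gt0.
  have tlt : t < Num.min t0 (del / (enorm e + c)) by rewrite /t ltr_pdivrMr // ltr_pMr // ltr1n.
  move: tlt; rewrite lt_min => /andP [tt0 tdel].
  have tdel' : t * (enorm e + c) < del by rewrite -ltr_pdivlMr.
  have D1 : D (x + t *: e + t *: w0).
    by apply: hD => //; rewrite enormZ gtr0_norm // mulrC ltr_pM2r.
  have D2 : D (x + t *: e + 0).
    by apply: hD => //; rewrite (_ : enorm 0 = 0) ?mulr_gt0 //; rewrite -(scale0r (0 : 'cV[R]_d)) enormZ normr0 mul0r.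
  have n1 : enorm (x + t *: e + t *: w0 - x) <= t * (enorm e + c).
    rewrite addKx3; apply: le_trans (enormD _ _) _.
    by rewrite !enormZ gtr0_norm // mulrDr lerD2l ler_wpM2l ?(ltW t0') // ltW.
  have n2 : enorm (x + t *: e + 0 - x) <= t * enorm e.
    by rewrite addr0 addKx2 enormZ gtr0_norm.
  have n2' : enorm (x + t *: e + 0 - x) <= t * (enorm e + c).
    by apply: le_trans n2 _; rewrite ler_wpM2l ?(ltW t0') // lerDl ltW.
  have b1 := hdel _ D1 (le_lt_trans n1 tdel').
  have b2 := hdel _ D2 (le_lt_trans n2' tdel').
  have E : t *: (Cm *m w0) = Cm *m (x + t *: e + t *: w0 - x) - Cm *m (x + t *: e + 0 - x).
    by rewrite addr0 addKx3 addKx2 -mulmxBr addKx2 scalemxAr.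
  have : t * enorm (Cm *m w0) <= t * (eps * (2 * enorm e + c)).
    rewrite -{1}(gtr0_norm t0') -enormZ E.
    apply: le_trans (enormD _ _) _; rewrite enormN.
    apply: le_trans (lerD b1 b2) _.
    rewrite (_ : t * (eps * (2 * enorm e + c)) = eps * (t * (enorm e + c)) + eps * (t * enorm e)); last by ring.
    by apply: lerD; apply: ler_wpM2l => //; apply: ltW.
  by rewrite ler_pM2l.
apply/matrixP => i j; apply/eqP; rewrite -subr_eq0.
set dl := (delta_mx j (0 : 'I_1) : 'cV[R]_d).
have E0 := enorm_ge0 dl.
have E1 : 0 < enorm dl + 1 by rewrite ltr_wpDl.
set s := c / 2 / (enorm dl + 1).
have s0 : 0 < s by rewrite !divr_gt0.
have hlt : enorm (s *: dl) < c.
  rewrite enormZ gtr0_norm // (_ : s * enorm dl = c / 2 * (enorm dl / (enorm dl + 1))); last by rewrite /s; ring.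
  apply: le_lt_trans (ler_piMr _ _) _.
  - by rewrite divr_ge0 // ltW.
  - by rewrite ler_pdivrMr // mul1r lerDl ler01.
  - by rewrite gtr_pMr // invf_lt1 // ltr1n.
move/eqP: (step _ hlt); rewrite -scalemxAr scaler_eq0 (gt_eqF s0) /= -colE => /eqP hc.
have := congr1 (fun M : 'cV[R]_p => M i 0) hc; rewrite !mxE => ->.
by [].
Qed.

Lemma mxnorm_le_enorm {R : realType} n (v : 'cV[R]_n) : `|v| <= enorm v.
Proof.
rewrite [`|v|]mx_normrE; apply: bigmax_le; first exact: enorm_ge0.
by move=> [i j] _ /=; rewrite (ord1 j); exact: enorm_entry.
Qed.

Lemma entry_le_mxnorm {R : realType} n (v : 'cV[R]_n) i : `|v i 0| <= `|v|.
Proof.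
rewrite [`|v|]mx_normrE.
exact: (le_bigmax _ (fun ij : 'I_n * 'I_1 => `|v ij.1 ij.2|) (i, 0)).
Qed.

Lemma enorm_le_mxnorm {R : realType} n (v : 'cV[R]_n) : enorm v <= n%:R * `|v|.
Proof.
apply: le_trans (enorm_le_sum v) _.
apply: le_trans (ler_sum _ (fun i _ => entry_le_mxnorm v i)) _.
by rewrite sumr_const card_ord mulr_natl.
Qed.

Lemma nbhs_mx {R : realType} n (x : 'cV[R]_n) (P : 'cV[R]_n -> Prop) :
  nbhs x P -> exists2 r : R, 0 < r & forall y, `|x - y| < r -> P y.
Proof.
move=> /nbhs_ballP [r r0 h]; exists r => // y xy; apply: h.
by rewrite mx_norm_ball.
Qed.

Lemma mx_nbhs {R : realType} n (x : 'cV[R]_n) (r : R) : 0 < r ->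
  nbhs x (fun y => `|x - y| < r).
Proof. by move=> r0; apply/nbhs_ballP; exists r => //; rewrite mx_norm_ball. Qed.

Lemma dotvD {R : realType} n (y z e : 'cV[R]_n) : dotv (y + z) e = dotv y e + dotv z e.
Proof. by rewrite /dotv -sumrD'; apply: eq_bigr => i _; rewrite mxE mulrDl. Qed.

Lemma dotvZ {R : realType} n (a : R) (y e : 'cV[R]_n) : dotv (a *: y) e = a * dotv y e.
Proof. by rewrite /dotv mulr_sumr; apply: eq_bigr => i _; rewrite mxE mulrA. Qed.

Lemma dotvB {R : realType} n (y z e : 'cV[R]_n) : dotv (y - z) e = dotv y e - dotv z e.
Proof. by rewrite /dotv -sumrB; apply: eq_bigr => i _; rewrite !mxE mulrBl. Qed.

Lemma dotv_ee {R : realType} n (e : 'cV[R]_n) : enorm e = 1 -> dotv e e = 1.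
Proof.
move=> h; rewrite -(expr1n R 2) -h enorm_sqr /dotv.
by apply: eq_bigr => i _; rewrite expr2.
Qed.

Lemma dotv_le {R : realType} n (w e : 'cV[R]_n) : `|dotv w e| <= enorm w * enorm e.
Proof.
have := cauchy_schwarz (fun i => w i 0) (fun i => e i 0).
rewrite -!enorm_sqr -exprMn -/(dotv w e) => h.
rewrite -(ger0_norm (mulr_ge0 (enorm_ge0 w) (enorm_ge0 e))).
by rewrite -ler_sqr ?nnegrE ?normr_ge0 // !real_normK ?num_real.
Qed.

Lemma subBB (V : zmodType) (a b c d : V) : (a - b) - (c - d) = (a - c) - (b - d).
Proof. by rewrite !opprB addrACA [RHS]addrACA [-b + _]addrC. Qed.

Lemma cone_of_lip {R : realType} d (D : set 'cV[R]_d) x :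
  lipschitz_domain D -> D x ->
  exists e : 'cV[R]_d, exists c : R, exists t0 : R, [/\ 0 < c, 0 < t0 &
     forall t w, 0 < t -> t < t0 -> enorm w < c * t -> D (x + t *: e + w)].
Proof.
move=> [Om [oO _ _ DE hb]] Dx; rewrite DE; rewrite DE in Dx.
have [Ox|Ox] := pselect (Om x).
  have [r r0 hr] := nbhs_mx (open_nbhs_nbhs (conj oO Ox)).
  exists 0, 1, r; split => // t w t0 tr wt.
  apply: subset_closure; rewrite scaler0 addr0; apply: hr.
  rewrite opprD addrA subrr add0r normrN.
  apply: le_lt_trans (mxnorm_le_enorm w) _; apply: lt_trans tr.
  by rewrite -[t]mul1r.
have [r [e [g [L [r0 e1 Lg hO]]]]] := hb x Dx Ox.
set L' := `|L|.
have L'0 : 0 <= L' by rewrite /L' normr_ge0.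
have Lg' : forall y z, `|g y - g z| <= L' * enorm (y - z).
  move=> y z; apply: le_trans (Lg y z) _; apply: ler_wpM2r; first exact: enorm_ge0.
  exact: ler_norm.
set pr := fun y : 'cV[R]_d => y - dotv y e *: e.
have prB : forall y z, pr y - pr z = pr (y - z).
  by move=> y z; rewrite /pr subBB dotvB scalerBl.
have prn : forall w, enorm (pr w) <= 2 * enorm w.
  move=> w; apply: le_trans (enormD _ _) _; rewrite enormN enormZ e1 mulr1.
  rewrite mulr2n mulrDl mul1r lerD2l.
  by have := dotv_le w e; rewrite e1 mulr1.
have lipp : forall y z, g (pr y) <= g (pr z) + 2 * L' * enorm (y - z).
  move=> y z; have := Lg' (pr y) (pr z); rewrite prB => h.
  have h2 := ler_wpM2l L'0 (prn (y - z)).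
  have := ler_norm (g (pr y) - g (pr z)).
  rewrite mulrA [L' * 2]mulrC in h2.
  lra.
set K := 1 + 2 * L'.
have K1 : 1 <= K by rewrite /K lerDl mulr_ge0.
have K0 : 0 < K by apply: lt_le_trans K1.
have gx : g (pr x) <= dotv x e.
  rewrite leNgt; apply/negP => lt.
  set eta := g (pr x) - dotv x e.
  have eta0 : 0 < eta by rewrite subr_gt0.
  set rho := Num.min r (eta / K).
  have rho0 : 0 < rho by rewrite lt_min r0 divr_gt0.
  have d1 : 0 < d%:R + 1 :> R by rewrite ltr_wpDl.
  have rho'0 : 0 < rho / (d%:R + 1) by rewrite divr_gt0.
  have [y [Oy yx]] := Dx _ (mx_nbhs x rho'0).
  have ys : enorm (y - x) < rho.
    apply: le_lt_trans (enorm_le_mxnorm _) _.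
    rewrite -normrN opprB.
    apply: le_lt_trans (ler_wpM2l (ler0n _ _) (ltW yx)) _.
    rewrite mulrA ltr_pdivrMr // mulrC ltr_pM2l // ltrDl ltr01 //.
  move: ys; rewrite lt_min => /andP [ysr yse].
  have := (hO y ysr).1 Oy => gy.
  have dy : dotv y e <= dotv x e + enorm (y - x).
    have -> : dotv y e = dotv x e + dotv (y - x) e by rewrite dotvB addrC subrK.
    rewrite lerD2l.
    by apply: le_trans (ler_norm _) _; have := dotv_le (y - x) e; rewrite e1 mulr1.
  have := lipp x y; rewrite enormB => hxy.
  have : K * enorm (y - x) < eta by rewrite -ltr_pdivlMl // mulrC.
  rewrite /K mulrDl mul1r -mulrA.
  rewrite /eta; lra.
exists e, (K^-1), (r / 2); split.
- by rewrite invr_gt0.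
- by rewrite divr_gt0.
move=> t w t0 tr wt.
apply: subset_closure.
have ew : enorm w < t.
  apply: lt_le_trans wt _; rewrite ger_pMl // invf_le1 //.
have yx : x + t *: e + w - x = t *: e + w by rewrite addKx3.
have yr : enorm (x + t *: e + w - x) < r.
  rewrite yx; apply: le_lt_trans (enormD _ _) _.
  rewrite enormZ e1 mulr1 gtr0_norm //.
  apply: (@lt_trans _ _ (t + t)); first by rewrite ltrD2l.
  by rewrite -mulr2n -mulr_natr -ltr_pdivlMr.
apply/(hO _ yr).
have dyv : dotv (x + t *: e + w) e = dotv x e + t + dotv w e.
  by rewrite !dotvD dotvZ dotv_ee // mulr1.
have dw : - enorm w <= dotv w e.
  rewrite lerNl; apply: le_trans (ler_norm _) _; rewrite normrN.
  by have := dotv_le w e; rewrite e1 mulr1.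
have := lipp (x + t *: e + w) x; rewrite yx => hg.
have pw : pr (t *: e + w) = pr w.
  rewrite /pr dotvD dotvZ dotv_ee // mulr1 scalerDl opprD addrACA subrr add0r //.
have hK : K * enorm w < t by rewrite mulrC -ltr_pdivlMr // mulrC.
move: hK; rewrite /K mulrDl mul1r -mulrA => hK.
have h3 : g (pr (x + t *: e + w)) <= g (pr x) + 2 * L' * enorm w.
  have := Lg' (pr (x + t *: e + w)) (pr x); rewrite prB yx pw => h.
  have h2 := ler_wpM2l L'0 (prn w).
  have := ler_norm (g (pr (x + t *: e + w)) - g (pr x)).
  rewrite mulrA [L' * 2]mulrC in h2.
  lra.
change (g (pr (x + t *: e + w)) < dotv (x + t *: e + w) e).
rewrite dyv; lra.
Qed.

Lemma coord_deriv {R : realType} p (f : 'cV[R]_p -> 'cV[R]_p) (z v : 'cV[R]_p) (s : R) i :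
  derivable f (z + s *: v) v ->
  is_derive s 1 (fun t : R => f (z + t *: v) i 0) ('D_v f (z + s *: v) i 0).
Proof.
move=> df.
have E : (fun h : R => h^-1 *: ((fun t : R => f (z + t *: v) i 0) (h *: 1 + s)
              - f (z + s *: v) i 0)) =
         (fun M : 'cV[R]_p => M i 0) \o
         (fun h : R => h^-1 *: (f (h *: v + (z + s *: v)) - f (z + s *: v))).
  apply/funext => h /=.
  have -> : (h%:A : R) = h by apply: mulr1.
  rewrite !mxE /= scalerDl addrCA.
  by [].
have cv : (fun h : R => h^-1 *: ((fun t : R => f (z + t *: v) i 0) (h *: 1 + s)
              - f (z + s *: v) i 0)) @ 0^' --> 'D_v f (z + s *: v) i 0.
  rewrite E; apply: continuous_cvg; first exact: coord_continuous.
  exact: df.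
have dphi : derivable (fun t : R => f (z + t *: v) i 0) s 1.
  by apply/cvg_ex; eexists; exact: cv.
apply: DeriveDef => //.
by apply: cvg_lim => //.
Qed.

Definition trc {R : realType} p (k : nat) (h : 'cV[R]_p) : 'cV[R]_p :=
  \col_i (if (i < k)%N then h i 0 else 0).

Lemma trc0 {R : realType} p (h : 'cV[R]_p) : trc 0 h = 0.
Proof. by apply/matrixP => i j; rewrite !mxE. Qed.

Lemma trcp {R : realType} p (h : 'cV[R]_p) : trc p h = h.
Proof. by apply/matrixP => i j; rewrite !mxE ltn_ord (ord1 j). Qed.

Lemma trcS {R : realType} p (k : 'I_p) (h : 'cV[R]_p) :
  trc k.+1 h = trc k h + h k 0 *: delta_mx k 0.
Proof.
apply/matrixP => i j; rewrite !mxE (ord1 j) eqxx andbT ltnS.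
case: (eqVneq i k) => [->|ik]; first by rewrite ltnn leqnn mulr1 add0r.
rewrite mulr0 addr0 leq_eqVlt.
by have -> : (nat_of_ord i == nat_of_ord k) = false by apply/negbTE.
Qed.

Lemma path_norm {R : realType} p (y h : 'cV[R]_p) (k : 'I_p) (s : R) :
  `|s| <= `|h k 0| -> `|y - (y + trc k h + s *: delta_mx k 0)| <= `|h|.
Proof.
move=> hs; rewrite -opprB addKx3 normrN.
rewrite [`|_|]mx_normrE; apply: bigmax_le; first exact: normr_ge0.
move=> [i j] _ /=; rewrite !mxE (ord1 j) eqxx andbT.
case: (eqVneq i k) => [->|ik].
  by rewrite ltnn add0r ?eqxx mulr1; apply: le_trans hs (entry_le_mxnorm h k).
rewrite ?(negbTE ik) mulr0 addr0; case: ifP => _; first exact: entry_le_mxnorm.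
by rewrite normr0 normr_ge0.
Qed.

Lemma mvt_step {R : realType} p (P : 'cV[R]_p -> 'cV[R]_p) (z0 v : 'cV[R]_p) (a : R) i
  (G : 'cV[R]_p -> Prop) :
  (forall s, `|s| <= `|a| -> derivable P (z0 + s *: v) v /\ G (z0 + s *: v)) ->
  exists2 c, G (z0 + c *: v) &
    P (z0 + a *: v) i 0 - P z0 i 0 = 'D_v P (z0 + c *: v) i 0 * a.
Proof.
move=> H.
pose phi : R -> R := fun t : R => P (z0 + t *: v) i 0.
pose df : R -> R := fun s : R => 'D_v P (z0 + s *: v) i 0.
have dphi : forall s : R, `|s| <= `|a| -> is_derive s (1 : R) phi (df s).
  by move=> s hs; apply: coord_deriv; exact: (H s hs).1.
have phi0 : phi 0 = P z0 i 0 by rewrite /phi scale0r addr0.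
have [ha|ha] := lerP 0 a.
  have [c cI E] : exists2 c, c \in `[0, a] & phi a - phi 0 = df c * (a - 0).
    apply: MVT_segment => //.
      move=> x; rewrite in_itv /= => /andP [x0 xa]; apply: dphi.
      by rewrite !ger0_norm // ltW.
    apply: derivable_within_continuous => x; rewrite in_itv /= => /andP [x0 xa].
    by have [] := dphi x; rewrite ?ger0_norm.
  move: cI; rewrite in_itv /= => /andP [c0 ca].
  exists c; first by apply: (H c _).2; rewrite !ger0_norm.
  by rewrite -phi0 E subr0.
have [c cI E] : exists2 c, c \in `[a, 0] & phi 0 - phi a = df c * (0 - a).
  apply: MVT_segment; first exact: ltW.
    move=> x; rewrite in_itv /= => /andP [ax x0]; apply: dphi.
    by rewrite !ltr0_norm // lerN2 ltW.
  apply: derivable_within_continuous => x; rewrite in_itv /= => /andP [ax x0].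
  have hx : `|x| <= `|a|.
    by rewrite (ltr0_norm ha) ler_norml opprK ax /= (le_trans x0) // oppr_ge0 ltW.
  by have [] := dphi x hx.
move: cI; rewrite in_itv /= => /andP [ac c0].
exists c.
  apply: (H c _).2.
  by rewrite (ltr0_norm ha) ler_norml opprK ac /= (le_trans c0) // oppr_ge0 ltW.
by rewrite -phi0 -opprB E sub0r mulrN opprK.
Qed.

Lemma smooth_frechet {R : realType} p (U : set 'cV[R]_p) (P : 'cV[R]_p -> 'cV[R]_p) y :
  open U -> smooth_on U P -> U y -> efrechet P y (jac P y).
Proof.
move=> oU sP Uy eps eps0.
set K : R := (p * p)%:R + 1.
have K0 : 0 < K by rewrite /K ltr_wpDl.
set e' := eps / K.
have e'0 : 0 < e' by rewrite divr_gt0.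
have cD : forall k : 'I_p, {for y, continuous (fun z => 'D_(delta_mx k 0) P z)}.
  by move=> k; exact: (sP [:: delta_mx k 0] 0 y Uy).2.
have h1 : nbhs y U := open_nbhs_nbhs (conj oU Uy).
have h2 : \forall z \near y, forall ki : 'I_p * 'I_p,
    `|'D_(delta_mx ki.1 0) P y ki.2 0 - 'D_(delta_mx ki.1 0) P z ki.2 0| < e'.
  apply: (@filter_forall _ _ (fun (ki : 'I_p * 'I_p) (z : 'cV[R]_p) =>
    `|'D_(delta_mx ki.1 0) P y ki.2 0 - 'D_(delta_mx ki.1 0) P z ki.2 0| < e') (nbhs y) _).
  move=> -[k i].
  have := @continuous_cvg _ _ _ (nbhs y) _ _ _ _ (@coord_continuous R p 1 i 0 _) (cD k).
  move=> hc; apply: filterS _ ((proj1 (cvgrPdist_lt _ _) (hc _)) e' e'0) => t /=. by [].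
have [r r0 hr] := nbhs_mx (filterI h1 h2).
exists r => // z zr.
set h := z - y.
have hm : `|h| <= enorm h := mxnorm_le_enorm h.
have zh : z = y + h by rewrite /h addrC subrK.
have step : forall (k : 'I_p) i,
    `|P (y + trc k.+1 h) i 0 - P (y + trc k h) i 0
       - 'D_(delta_mx k 0) P y i 0 * h k 0| <= e' * `|h k 0|.
  move=> k i.
  pose G := fun w => U w /\ forall ki : 'I_p * 'I_p,
       `|'D_(delta_mx ki.1 0) P y ki.2 0 - 'D_(delta_mx ki.1 0) P w ki.2 0| < e'.
  have Hs : forall s, `|s| <= `|h k 0| ->
      derivable P (y + trc k h + s *: delta_mx k 0) (delta_mx k 0) /\
      G (y + trc k h + s *: delta_mx k 0).
    move=> s hs.
    have hb := hr _ (le_lt_trans (path_norm y hs) (le_lt_trans hm zr)).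
    split; last exact: hb.
    exact: (sP [::] _ _ hb.1).1.
  have [c [_ Gc] E] := @mvt_step R p P (y + trc k h) (delta_mx k 0) (h k 0) i G Hs.
  rewrite trcS addrA E -mulrBl normrM ler_wpM2r //.
  by have := Gc (k, i); rewrite distrC => /ltW.
have hi : forall i, `|(P z - P y - jac P y *m h) i 0| <= e' * \sum_(k < p) `|h k 0|.
  move=> i.
  have -> : (P z - P y - jac P y *m h) i 0 =
     \sum_(k < p) (P (y + trc k.+1 h) i 0 - P (y + trc k h) i 0
       - 'D_(delta_mx k 0) P y i 0 * h k 0).
    rewrite sumrB.
    have -> : \sum_(k < p) (P (y + trc k.+1 h) i 0 - P (y + trc k h) i 0) =
        P z i 0 - P y i 0.
      rewrite -(big_mkord xpredT (fun k => P (y + trc k.+1 h) i 0 - P (y + trc k h) i 0)).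
      by rewrite telescope_sumr // trcp trc0 addr0 -zh.
    rewrite !mxE; congr (_ - _); apply: eq_bigr => k _; rewrite !mxE.
    by [].
  apply: le_trans (ler_norm_sum _ _ _) _.
  rewrite mulr_sumr; apply: ler_sum => k _; exact: step.
apply: le_trans (enorm_le_sum _) _.
apply: le_trans (ler_sum _ (fun i _ => hi i)) _.
have sh : \sum_(k < p) `|h k 0| <= p%:R * enorm h.
  apply: le_trans (ler_sum _ (fun k _ => enorm_entry h k)) _.
  by rewrite sumr_const card_ord mulr_natl.
rewrite sumr_const card_ord -mulr_natl.
apply: le_trans (_ : p%:R * (e' * (p%:R * enorm h)) <= _).
  by rewrite ler_wpM2l // ler_wpM2l // ltW.
have -> : p%:R * (e' * (p%:R * enorm h)) = ((p * p)%:R / K) * (eps * enorm h).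
  by rewrite natrM /e'; field; rewrite gt_eqF.
apply: ler_piMl; first by rewrite mulr_ge0 ?enorm_ge0 // ltW.
by rewrite ler_pdivrMr // mul1r /K lerDl.
Qed.

Unset Implicit Arguments.
Set Strict Implicit.

Theorem proposition2p3 (R : realType) (p d : nat)
  (N : forall m n : nat, 'M[R]_(m, n) -> R)
  (M : set 'cV[R]_p) (D : set 'cV[R]_d)
  (V Vh : set ('cV[R]_d -> 'cV[R]_p))
  (Ih : ('cV[R]_d -> 'cV[R]_p) -> ('cV[R]_d -> 'cV[R]_p))
  (U : set 'cV[R]_p) (P : 'cV[R]_p -> 'cV[R]_p)
  (u : 'cV[R]_d -> 'cV[R]_p) (Du : 'cV[R]_d -> 'M[R]_(p, d))
  (x : 'cV[R]_d) (JI : 'M[R]_(p, d)) :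
  consistent_mxnorm N ->
  embedded_submanifold M ->
  compact D -> connected D -> lipschitz_domain D ->
  fun_subspace V ->
  (forall f, V f -> {within D, continuous f}) ->
  Vh `<=` V -> finite_dim_subspace V Vh ->
  projection_onto V Vh Ih ->
  closest_point_proj_on M U P ->
  (* u in tilde V(D, M) *)
  V u -> (forall y, D y -> M (u y) /\ U (Ih u y)) ->
  (* u in C^1(D, R^p), with gradient Du *)
  (forall y, D y -> is_rel_grad D u y (Du y)) -> {within D, continuous Du} ->
  D x ->
  (* Ih u differentiable at x, with gradient JI *)
  is_rel_grad D (Ih u) x JI ->
  (exists J, is_rel_grad D (P \o Ih u) x J) /\
  (forall J : 'M[R]_(p, d), is_rel_grad D (P \o Ih u) x J ->
    ((N p d (J - Du x))%:E <=
       C1_const N M P * (N p d (JI - Du x))%:E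
       + C2_const N U P * (enorm (Ih u x - u x))%:E
           * ((N p d (JI - Du x))%:E + C0_const N D Du))%E).
Proof.
move=> hN hM cD conD lipD fV contV sub fdim proj hP Vu hu hgrad cDu Dx hI.
have [N0 [N00 [NZ [ND [NM Nv]]]]] := hN.
have [oU MU sP hPU] := hP.
have Ua : U (Ih u x) := (hu x Dx).2.
have Mux : M (u x) := (hu x Dx).1.
have fPa := smooth_frechet oU sP Ua.
have hJ0 := chain_rel hN hI fPa.
split; first by eexists; exact: hJ0.
move=> J hJ.
have cone := cone_of_lip lipD Dx.
have EJ := rel_grad_unique cone hJ hJ0.
have Pfix : forall m, M m -> P m = m.
  move=> m Mm; have [_ _ uq] := hPU m (MU m Mm).
  apply/esym/uq => //; rewrite subrr.
  rewrite (_ : enorm 0 = 0); first exact: enorm_ge0.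
  by rewrite -(scale0r (0 : 'cV[R]_p)) enormZ normr0 mul0r.
have g1 := chain_rel hN (hgrad x Dx) (smooth_frechet oU sP (MU _ Mux)).
have g2 : is_rel_grad D (P \o u) x (Du x).
  move=> eps eps0; have [del del0 hd] := hgrad x Dx eps eps0.
  exists del => // y Dy yx.
  rewrite /= (Pfix _ (hu _ Dy).1) (Pfix _ (hu _ Dx).1); exact: hd.
have EDu := rel_grad_unique cone g2 g1.
set G1 := jac P (u x). set Ga := jac P (Ih u x).
have E : J - Du x = G1 *m (JI - Du x) + (Ga - G1) *m JI.
  rewrite EJ mulmxBr mulmxBl -EDu.
  by rewrite [in RHS]addrC [in RHS]addrA subrK.
set a := N _ _ (JI - Du x).
set b := N _ _ (Du x).
set e := enorm (Ih u x - u x).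
have a0 : 0 <= a := N0 _ _ _.
have b0 : 0 <= b := N0 _ _ _.
have NJI : N _ _ JI <= a + b.
  have -> : JI = (JI - Du x) + Du x by rewrite subrK.
  exact: ND.
have real1 : N _ _ (J - Du x) <= N _ _ G1 * a + N _ _ (Ga - G1) * (a + b).
  rewrite E; apply: le_trans (ND _ _ _ _) _.
  apply: lerD; first exact: (NM _ _ _ _ _).
  apply: le_trans (NM _ _ _ _ _) _.
  by apply: ler_wpM2l => //; exact: N0.
have Nz : N p p 0 = 0.
  by rewrite -(scale0r (0 : 'M[R]_(p, p))) NZ normr0 mul0r.
have F1 : ((N _ _ G1)%:E <= C1_const N M P)%E.
  by apply: ereal_sup_ubound; exists (u x).
have F0 : ((N _ _ (Du x))%:E <= C0_const N D Du)%E.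
  by apply: ereal_sup_ubound; exists x.
have F2 : ((N _ _ (Ga - G1))%:E <= C2_const N U P * e%:E)%E.
  have [eq|neq] := eqVneq (Ih u x) (u x).
    have -> : Ga - G1 = 0 by rewrite /Ga /G1 eq subrr.
    have -> : e = 0.
      rewrite /e eq subrr -(scale0r (0 : 'cV[R]_p)) enormZ normr0 mul0r //.
    by rewrite Nz mule0.
  have e0 : 0 < e.
    rewrite lt_def enorm_ge0 andbT; apply/eqP => /enorm_eq0 /eqP.
    by rewrite subr_eq0 (negbTE neq).
  have q : ((N _ _ (Ga - G1) / e)%:E <= C2_const N U P)%E.
    apply: ereal_sup_ubound; exists (Ih u x), (u x); split => //.
    exact: MU.
  have -> : N _ _ (Ga - G1) = (N _ _ (Ga - G1) / e) * e by rewrite divfK // gt_eqF.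
  rewrite EFinM; apply: lee_pmul => //.
  - by rewrite lee_fin divr_ge0 // ltW.
  - by rewrite lee_fin ltW.
apply: le_trans (_ : _ <= (N _ _ G1 * a + N _ _ (Ga - G1) * (a + b))%:E)%E _.
  by rewrite lee_fin.
rewrite !EFinD !EFinM; apply: leeD.
  by apply: lee_pmul => //; rewrite lee_fin.
apply: lee_pmul => //.
- by rewrite lee_fin.
- by rewrite lee_fin addr_ge0.
- by rewrite EFinD; apply: leeD.
Qed.
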